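(* Let $R$ be an associative unital division ring over a field $F$ with $\operatorname{char} F=0$ (with $F$ contained in the center of $R$). Let $\varphi_{i,j}\in R$ for $i,j\in\mathbb{Z}_{\geq 0}$. For $l,m\in\mathbb{Z}_{\geq0}$ and $n\geq 1$ put $$\Theta_{l,m,n}=\bigl(\varphi_{l+i-1,\,m+j-1}\bigr)_{1\leq i,j\leq n},\qquad \theta_{l,m,n}=|\Theta_{l,m,n}|_{nn},$$ and adopt the convention $\theta_{l,m,0}^{-1}:=0$. Assume that all quasideterminants of all the matrices $\Theta_{l,m,n}$ and of their square submatrices occurring below are defined and that all $\theta_{l,m,n}$ ($n\geq1$) are invertible. Then for all $l,m\geq 0$ and $n\geq 1$, $$\theta_{l+1,m+1,n}=\theta_{l,m,n+1}+\theta_{l+1,m,n}\bigl(\theta_{l,m,n}^{-1}-\theta_{l+1,m+1,n-1}^{-1}\bigr)\theta_{l,m+1,n}.$$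
   Context: For an $n\times n$ matrix $X=(x_{ij})$ over $R$, let $X^{ij}$ denote the matrix obtained by deleting row $i$ and column $j$, $r_i^j$ the $i$-th row with the $j$-th entry removed, and $c_j^i$ the $j$-th column with the $i$-th entry removed. The quasideterminant is $|X|_{ij}=x_{ij}-r_i^j\,(X^{ij})^{-1}\,c_j^i$, defined when $X^{ij}$ is invertible; for $n=1$, $|X|_{11}=x_{11}$. *)

(* Defs.v *)
From HB Require Import structures.
From mathcomp Require Import all_boot all_order all_algebra.
From Stdlib Require Import ClassicalEpsilon.
Set Implicit Arguments. Unset Strict Implicit. Unset Printing Implicit Defensive.
Import Order.TTheory GRing.Theory Num.Theory.
Local Open Scope ring_scope.

Section Quasidet.
Variable R : unitRingType.

Definition mx_invertible n (A : 'M[R]_n) : Prop :=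
  exists B : 'M[R]_n, A *m B = 1%:M /\ B *m A = 1%:M.

(* a (the, when it exists: two-sided inverses are unique) inverse of A;
   arbitrary when A is not invertible *)
Definition mx_inv n (A : 'M[R]_n) : 'M[R]_n :=
  epsilon (inhabits 0) (fun B : 'M[R]_n => A *m B = 1%:M /\ B *m A = 1%:M).

Definition delmx n (X : 'M[R]_n.+1) (i j : 'I_n.+1) : 'M[R]_n :=
  \matrix_(a, b) X (lift i a) (lift j b).
Definition delrow n (X : 'M[R]_n.+1) (i j : 'I_n.+1) : 'rV[R]_n :=
  \row_b X i (lift j b).
Definition delcol n (X : 'M[R]_n.+1) (i j : 'I_n.+1) : 'cV[R]_n :=
  \col_a X (lift i a) j.

Definition qdet_defined n (X : 'M[R]_n.+1) (i j : 'I_n.+1) : Prop :=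
  mx_invertible (delmx X i j).

Definition qdet n (X : 'M[R]_n.+1) (i j : 'I_n.+1) : R :=
  X i j - (delrow X i j *m mx_inv (delmx X i j) *m delcol X i j) 0 0.

(* Theta_{l,m,n} = (phi_{l+i-1, m+j-1})_{1<=i,j<=n}  (0-indexed here) *)
Definition Theta (phi : nat -> nat -> R) (l m n : nat) : 'M[R]_n :=
  \matrix_(i < n, j < n) phi (l + i)%N (m + j)%N.

(* theta_{l,m,n} = |Theta_{l,m,n}|_{nn} for n >= 1 (value 0 for n = 0, unused) *)
Definition theta (phi : nat -> nat -> R) (l m n : nat) : R :=
  match n with
  | 0 => 0
  | k.+1 => qdet (Theta phi l m k.+1) ord_max ord_max
  end.

Definition theta_inv (phi : nat -> nat -> R) (l m n : nat) : R :=
  match n with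
  | 0 => 0
  | k.+1 => (theta phi l m k.+1)^-1
  end.

End Quasidet.

(* Main.v *)
Require Import Defs.
From HB Require Import structures.
From mathcomp Require Import all_boot all_order all_algebra.
From mathcomp Require Import zify.
From Stdlib Require Import ClassicalEpsilon.
Import GRing.Theory.
Local Open Scope ring_scope.

Section H.
Variable R : unitRingType.
Variable phi : nat -> nat -> R.

Lemma inv_del L M k : (forall (l m n k : nat) (f g : 'I_k.+1 -> 'I_n),
      (forall a b : 'I_k.+1, (a < b)%N -> (f a < f b)%N) ->
      (forall a b : 'I_k.+1, (a < b)%N -> (g a < g b)%N) ->
      forall i j : 'I_k.+1, qdet_defined (mxsub f g (Theta phi l m n)) i j) ->
  mx_invertible (delmx (Theta phi L M k.+1) ord_max ord_max) /\ mx_invertible (Theta phi L M k).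
Proof.
move=> Hdef.
have := Hdef L M k.+1 k id id (fun a b h => h) (fun a b h => h) ord_max ord_max.
rewrite /qdet_defined (_ : mxsub id id _ = Theta phi L M k.+1); last by apply/matrixP => i j; rewrite mxE.
move=> H; split => //.
suff -> : Theta phi L M k = delmx (Theta phi L M k.+1) ord_max ord_max by [].
by apply/matrixP => i j; rewrite !mxE !lift_max.
Qed.

Lemma mx_invP n (A : 'M[R]_n) :
  mx_invertible A -> A *m mx_inv A = 1%:M /\ mx_inv A *m A = 1%:M.
Proof. move=> H; rewrite /mx_inv; exact: (epsilon_spec (inhabits 0) _ H). Qed.

Lemma sum_support (G : nat -> R) L k N :
  (forall i, (i < L)%N || (L + k <= i)%N -> G i = 0) -> (L + k <= N)%N ->
  \sum_(i < N) G i = \sum_(i < k) G (L + i)%N.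
Proof.
move=> HG HN.
rewrite -(big_mkord xpredT) (@big_cat_nat _ _ _ L 0 N) /=; [|by []|]; last by move: HN; lia.
rewrite big_nat big1 ?add0r; last by move=> i hi; apply: HG; apply/orP; left; move: hi; lia.
rewrite (@big_cat_nat _ _ _ (L + k) L N) /=; [|by lia|by []].
rewrite [\sum_(L + k <= i < N) _]big_nat [\sum_(L + k <= i < N | _) _]big1 ?addr0; last first.
  by move=> i hi; apply: HG; apply/orP; right; move: hi; lia.
rewrite -{1}(add0n L) big_addn addKn big_mkord.
by apply: eq_bigr => i _; rewrite addnC.
Qed.

Lemma Theta_uniq L M k N (d : nat -> R) :
  mx_invertible (Theta phi L M k) ->
  (forall i, (i < L)%N || (L + k <= i)%N -> d i = 0) -> (L + k <= N)%N ->
  (forall j, (M <= j < M + k)%N -> \sum_(i < N) d i * phi i j = 0) ->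
  forall i, d i = 0.
Proof.
move=> Hinv Hs HN Hc.
pose del : 'rV[R]_k := \row_i d (L + i)%N.
have H0 : del *m Theta phi L M k = 0.
  apply/matrixP => a b; rewrite !mxE.
  transitivity (\sum_(i < N) d i * phi i (M + b)%N); last first.
    by apply: Hc; have := ltn_ord b; lia.
  rewrite (@sum_support (fun i => d i * phi i (M + b)%N) L k N) //; last first.
    by move=> i hi; rewrite Hs ?mul0r.
  by apply: eq_bigr => i _; rewrite !mxE.
have Hd : del = 0.
  case: (mx_invP _ _ Hinv) => H1 _.
  by rewrite -[del]mulmx1 -H1 mulmxA H0 mul0mx.
move=> i; case: (boolP ((L <= i)%N && (i < L + k)%N)) => [/andP[h1 h2]|hi].
  have hk : (i - L < k)%N by lia.
  have := congr1 (fun A : 'rV_k => A 0 (Ordinal hk)) Hd.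
  by rewrite /= !mxE /= subnKC.
by apply: Hs; move: hi; lia.
Qed.


Lemma Theta_exist L M k N :
  mx_invertible (delmx (Theta phi L M k.+1) ord_max ord_max) -> (L + k < N)%N ->
  exists c : nat -> R,
  [/\ forall i, (i < L)%N || (L + k < i)%N -> c i = 0,
      c (L + k)%N = 1,
      forall j, (M <= j < M + k)%N -> \sum_(i < N) c i * phi i j = 0 &
      \sum_(i < N) c i * phi i (M + k)%N = theta phi L M k.+1].
Proof.
move=> Hi HN.
set T := Theta phi L M k.+1.
set B := delmx T ord_max ord_max.
have [_ HBl] := mx_invP _ _ Hi.
pose lam : 'rV[R]_k := - (delrow T ord_max ord_max *m mx_inv B).
pose c := fun i : nat =>
  if (L <= i)%N then
    (if (insub (i - L)%N : option 'I_k) is Some a then lam 0 a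
     else ((i == L + k)%N)%:R)
  else 0.
have cout : forall i, (i < L)%N || (L + k < i)%N -> c i = 0.
  move=> i hi; rewrite /c; case: ifP => // hL.
  rewrite insubF; last by apply/negbTE; move: hi hL; lia.
  by rewrite (_ : (i == L + k) = false) //; apply/negbTE; move: hi; lia.
have cmax : c (L + k)%N = 1.
  by rewrite /c leq_addr insubF ?eqxx // addKn ltnn.
have cin : forall a : 'I_k, c (L + a)%N = lam 0 a.
  by move=> a; rewrite /c leq_addr addKn valK.
have Hsum : forall j, \sum_(i < N) c i * phi i j =
    \sum_(a < k) lam 0 a * phi (L + a)%N j + phi (L + k)%N j.
  move=> j; rewrite (@sum_support (fun i => c i * phi i j) L k.+1 N); last 2 first.
  - by move=> i hi; rewrite cout ?mul0r //; move: hi; lia.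
  - by rewrite addnS.
  rewrite big_ord_recr /=; congr (_ + _).
    by apply: eq_bigr => a _; rewrite cin.
  by rewrite cmax mul1r.
have Hrow : lam *m B = - delrow T ord_max ord_max.
  by rewrite /lam mulNmx -mulmxA HBl mulmx1.
exists c; split.
- exact: cout.
- exact: cmax.
- move=> j hj; rewrite Hsum.
  have hjk : (j - M < k)%N by lia.
  have := congr1 (fun A : 'rV_k => A 0 (Ordinal hjk)) Hrow.
  rewrite /= !mxE.
  rewrite (eq_bigr (fun a => lam 0 a * phi (L + a)%N j)); last first.
    by move=> a _; rewrite !mxE !lift_max /= subnKC //; case/andP: hj.
  by rewrite lift_max /= subnKC ?addrN //; [move=> -> ; rewrite addNr | case/andP: hj].
- rewrite Hsum /theta /qdet -/T -/B.
  rewrite (_ : delrow T ord_max ord_max *m mx_inv B = - lam); last by rewrite /lam opprK.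
  rewrite mulNmx !mxE opprK addrC; congr (_ + _).
  by apply: eq_bigr => a _; rewrite !mxE lift_max.
Qed.


Lemma final_alg (t1 t2 t3 t4i t5i t6 Sw Sx Sy : R) :
  t1 - Sw + t3 * t4i * Sx = 0 -> t2 - Sw + t3 * t5i * Sy = 0 ->
  t4i * (Sx - t6) - t5i * (Sy - t6) = 0 ->
  t2 = t1 + t3 * (t4i - t5i) * t6.
Proof.
move=> E1 E2 E3.
have h1 : t1 = Sw - t3 * t4i * Sx.
  by apply/eqP; rewrite -subr_eq0 opprB addrA addrAC E1.
have h2 : t2 = Sw - t3 * t5i * Sy.
  by apply/eqP; rewrite -subr_eq0 opprB addrA addrAC E2.
have h3 : t4i * Sx = t4i * t6 + t5i * (Sy - t6).
  move/subr0_eq: E3; rewrite mulrBr => /eqP; rewrite subr_eq => /eqP ->.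
  by rewrite addrC.
rewrite h1 h2 -(mulrA t3 t4i Sx) h3 mulrDr !mulrBr mulrBl !mulrA.
rewrite -addrA; congr (Sw + _).
rewrite opprD opprB addrACA addNr add0r addrAC subrr add0r.
by [].
Qed.

Lemma lin3 N (a b c : nat -> R) t (G : nat -> nat -> R) j :
  \sum_(i < N) (a i - b i + t * c i) * G i j =
  \sum_(i < N) a i * G i j - \sum_(i < N) b i * G i j + t * \sum_(i < N) c i * G i j.
Proof.
rewrite mulr_sumr -sumrB -big_split /=; apply: eq_bigr => i _.
by rewrite mulrDl mulrBl mulrA.
Qed.

Lemma lin4 N (a b c : nat -> R) t1 t2 (G : nat -> nat -> R) j :
  \sum_(i < N) (t1 * (a i - b i) - t2 * (c i - b i)) * G i j =
  t1 * (\sum_(i < N) a i * G i j - \sum_(i < N) b i * G i j)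
  - t2 * (\sum_(i < N) c i * G i j - \sum_(i < N) b i * G i j).
Proof.
rewrite -!sumrB !mulr_sumr -sumrB; apply: eq_bigr => i _.
by rewrite mulrBl -!mulrA -!mulrBl.
Qed.

End H.

Theorem proposition3p1
  (F : fieldType) (R : unitAlgType F)
  (charF0 : [pchar F] =i pred0)
  (R_division : forall x : R, x != 0 -> x \is a GRing.unit)
  (phi : nat -> nat -> R)
  (* all quasideterminants of all square submatrices (rows and columns chosen
     by strictly increasing index maps, including the full matrix) of every
     Theta_{l,m,n} are defined *)
  (Hdef : forall (l m n k : nat) (f g : 'I_k.+1 -> 'I_n),
      (forall a b : 'I_k.+1, (a < b)%N -> (f a < f b)%N) ->
      (forall a b : 'I_k.+1, (a < b)%N -> (g a < g b)%N) ->
      forall i j : 'I_k.+1, qdet_defined (mxsub f g (Theta phi l m n)) i j)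
  (* all theta_{l,m,n}, n >= 1, are invertible *)
  (Hinv : forall l m n : nat, (0 < n)%N -> theta phi l m n \is a GRing.unit)
  (l m n : nat) (hn : (1 <= n)%N) :
  theta phi l.+1 m.+1 n =
    theta phi l m n.+1
    + theta phi l.+1 m n * (theta_inv phi l m n - theta_inv phi l.+1 m.+1 n.-1)
      * theta phi l m.+1 n.
Proof.
case: n hn => [//|n'] _; rewrite [n'.+1.-1]/=.
have Iv := fun L M k => proj1 (@inv_del R phi L M k Hdef).
have It := fun L M k => proj2 (@inv_del R phi L M k Hdef).
have [u [uo u1 uc uth]] := @Theta_exist R phi l m n'.+1 (l + n').+2 (Iv _ _ _) ltac:(lia).
have [v [vo v1 vc vth]] := @Theta_exist R phi l.+1 m.+1 n' (l + n').+2 (Iv _ _ _) ltac:(lia).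
have [w [wo w1 wc wth]] := @Theta_exist R phi l.+1 m n' (l + n').+2 (Iv _ _ _) ltac:(lia).
have [x [xo x1 xc xth]] := @Theta_exist R phi l m n' (l + n').+2 (Iv _ _ _) ltac:(lia).
have [z [zo z1 zc zth]] := @Theta_exist R phi l m.+1 n' (l + n').+2 (Iv _ _ _) ltac:(lia).
rewrite !addSnnS in v1 w1 vth zth.
set N := (l + n').+2 in uth vth wth xth zth uc vc wc xc zc.
set J := (m + n'.+1)%N in uth vth zth *.
set t1 := theta phi l m n'.+2 in uth *.
set t2 := theta phi l.+1 m.+1 n'.+1 in vth *.
set t3 := theta phi l.+1 m n'.+1 in wth *.
set t4 := theta phi l m n'.+1 in xth *.
set t6 := theta phi l m.+1 n'.+1 in zth *.
have u4 : t4 \is a GRing.unit by apply: Hinv.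
set Sw := \sum_(i < N) w i * phi i J.
set Sx := \sum_(i < N) x i * phi i J.
have D1 := @Theta_uniq R phi l m n'.+1 N (fun i => u i - w i + t3 * t4^-1 * x i)
  (It _ _ _).
have E1 : t1 - Sw + t3 * t4^-1 * Sx = 0.
  rewrite -uth /Sw /Sx -lin3; apply: big1 => i _; rewrite D1 ?mul0r //.
  - move=> i0 hi /=.
    case: (ltnP i0 l) => h.
      by rewrite uo ?wo ?xo ?subrr ?mulr0 ?addr0 //; lia.
    case: (eqVneq i0 (l + n'.+1)%N) => [->|ne].
      by rewrite u1 w1 xo ?subrr ?mulr0 ?addr0 //; lia.
    by rewrite uo ?wo ?xo ?subrr ?mulr0 ?addr0 //; move: hi ne; lia.
  - by rewrite /N; lia.
  - move=> j hj /=; rewrite lin3.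
    case: (ltnP j (m + n')) => h.
      by rewrite uc ?wc ?xc ?subrr ?mulr0 ?addr0 //; move: hj h; lia.
    have -> : j = (m + n')%N by move: hj h; lia.
    by rewrite uc ?wth ?xth ?divrK // ?sub0r ?addNr //; lia.
set t5 := theta_inv phi l.+1 m.+1 n'.
have [Sy [E2 E3]] : exists Sy,
    t2 - Sw + t3 * t5 * Sy = 0 /\ t4^-1 * (Sx - t6) - t5 * (Sy - t6) = 0.
  case: n' @N @J @t1 @t2 @t3 @t4 @t6 @t5 @Sw @Sx u4 uo u1 uc uth vo v1 vc vth wo w1 wc wth xo x1 xc xth zo z1 zc zth D1 E1
    => [|n''] N J t1 t2 t3 t4 t6 t5 Sw Sx u4 uo u1 uc uth vo v1 vc vth wo w1 wc wth xo x1 xc xth zo z1 zc zth D1 E1.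
  - exists 0; rewrite /t5 /= !mulr0 mul0r !subr0 addr0; split.
    + have D2 := @Theta_uniq R phi l.+1 m.+1 0 N (fun i => v i - w i + 0 * v i)
        (It _ _ _).
      rewrite -vth /Sw.
      have := @lin3 R N v w v 0 phi J; rewrite mul0r addr0 => <-; apply: big1 => i _; rewrite D2 ?mul0r //.
      * move=> i0 hi /=.
        case: (ltnP i0 l.+1) => h.
          by rewrite vo ?wo ?subrr ?mulr0 ?addr0 //; lia.
        case: (eqVneq i0 (l + 1)%N) => [->|ne].
          by rewrite v1 w1 subrr mul0r addr0.
        by rewrite vo ?wo ?subrr ?mulr0 ?addr0 //; move: hi ne h; lia.
      * by move=> j hj; exfalso; move: hj; lia.
    + have D3 := @Theta_uniq R phi l m.+1 0 N (fun i => x i - z i + 0 * x i)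
        (It _ _ _).
      have -> : Sx - t6 = 0.
        rewrite -zth /Sx.
        have := @lin3 R N x z x 0 phi J; rewrite mul0r addr0 => <-; apply: big1 => i _; rewrite D3 ?mul0r //.
        * move=> i0 hi /=.
          case: (eqVneq i0 (l + 0)%N) => [->|ne].
            by rewrite x1 z1 subrr mul0r addr0.
          by rewrite xo ?zo ?subrr ?mulr0 ?addr0 //; move: hi ne; lia.
        * by rewrite /N; lia.
        * by move=> j hj; exfalso; move: hj; lia.
      by rewrite mulr0.
  - have [y [yo y1 yc yth]] := @Theta_exist R phi l.+1 m.+1 n'' N (Iv _ _ _) ltac:(rewrite /N; lia).
    rewrite !addSnnS in y1 yth.
    set t5' := theta phi l.+1 m.+1 n''.+1 in yth.
    have u5 : t5' \is a GRing.unit by apply: Hinv.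
    have et5 : t5 = t5'^-1 by [].
    exists (\sum_(i < N) y i * phi i J); rewrite et5; split.
    + have D2 := @Theta_uniq R phi l.+1 m.+1 n''.+1 N (fun i => v i - w i + t3 * t5'^-1 * y i)
        (It _ _ _).
      rewrite -vth /Sw -lin3; apply: big1 => i _; rewrite D2 ?mul0r //.
      * move=> i0 hi /=.
        case: (ltnP i0 l.+1) => h.
          by rewrite vo ?wo ?yo ?subrr ?mulr0 ?addr0 //; lia.
        case: (eqVneq i0 (l + n''.+2)%N) => [->|ne].
          by rewrite v1 w1 yo ?subrr ?mulr0 ?addr0 //; lia.
        by rewrite vo ?wo ?yo ?subrr ?mulr0 ?addr0 //; move: hi ne h; lia.
      * move=> j hj /=; rewrite lin3.
        case: (ltnP j (m + n''.+1)) => h.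
          by rewrite vc ?wc ?yc ?subrr ?mulr0 ?addr0 //; move: hj h; lia.
        have -> : j = (m + n''.+1)%N by move: hj h; lia.
        by rewrite vc ?wth ?yth ?divrK // ?sub0r ?addNr //; lia.
    + have D3 := @Theta_uniq R phi l m.+1 n''.+1 N
        (fun i => t4^-1 * (x i - z i) - t5'^-1 * (y i - z i)) (It _ _ _).
      rewrite -zth /Sx -lin4; apply: big1 => i _; rewrite D3 ?mul0r //.
      * move=> i0 hi /=.
        case: (ltnP i0 l) => h.
          by rewrite xo ?zo ?yo ?subrr ?mulr0 ?subr0 //; lia.
        case: (eqVneq i0 (l + n''.+1)%N) => [->|ne].
          by rewrite x1 z1 y1 !subrr !mulr0 subr0.
        by rewrite xo ?zo ?yo ?subrr ?mulr0 ?subr0 //; move: hi ne h; lia.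
      * by rewrite /N; lia.
      * move=> j hj /=; rewrite lin4.
        case: (ltnP j (m + n''.+1)) => h.
          by rewrite xc ?zc ?yc ?subrr ?mulr0 ?subr0 //; move: hj h; lia.
        have -> : j = (m + n''.+1)%N by move: hj h; lia.
        by rewrite xth ?yth ?zc ?subr0 ?mulVr ?subrr //; lia.
exact: (@final_alg R t1 t2 t3 t4^-1 t5 t6 Sw Sx Sy E1 E2 E3).
Qed.
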